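(* Let $\mathbb{L}/\mathbb{K}$ be a finite Galois extension of degree $N$ with Galois group $G=\{g_1,\dots,g_N\}$, $g_1=\mathrm{Id}$, and let $\alpha$ be a primitive element of $\mathbb{L}/\mathbb{K}$. Regard $\mathbb{L}\otimes_\mathbb{K}\mathbb{L}$ as an $\mathbb{L}$-vector space via the left factor, so that for any $\mathbb{K}$-linear $f:\mathbb{L}\to\mathbb{L}$ the map $\mathrm{Id}\otimes f$ is $\mathbb{L}$-linear. Let $m_\alpha:\mathbb{L}\to\mathbb{L}$, $x\mapsto\alpha x$, and choose a nonzero $v\in\mathbb{L}\otimes_\mathbb{K}\mathbb{L}$ with $(\mathrm{Id}\otimes m_\alpha)(v)=\alpha\cdot v$. For $g\in G$ set $v_g=(\mathrm{Id}\otimes g^{-1})(v)$. Then each $v_g$ is an eigenvector of $\mathrm{Id}\otimes m_\alpha$ with eigenvalue $g(\alpha)$, $(\mathrm{Id}\otimes g)(v_h)=v_{hg^{-1}}$ for all $g,h\in G$, $(v_{g_1},\dots,v_{g_N})$ is an $\mathbb{L}$-basis of $\mathbb{L}\otimes_\mathbb{K}\mathbb{L}$, and for every $a\in\mathbb{L}[G]$ the matrix of $\mathrm{Id}\otimes a$ in the basis $(v_{g_1},\dots,v_{g_N})$ equals $D_G(a)^\top$. Moreover, $D_G(a)$ is the matrix, in the $\mathbb{L}$-basis $(g_1,\dots,g_N)$ of $\mathbb{L}[G]$, of the $\mathbb{L}$-linear map $\mathbb{L}[G]\to\mathbb{L}[G]$, $f\mapsto f\circ a$.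
   Context: $\mathbb{L}[G]=\{\sum_ga_gg:a_g\in\mathbb{L}\}$ with composition product $(ag)\circ(bh)=(a\,g(b))(gh)$ extended by distributivity; $a=\sum a_gg$ acts on $\mathbb{L}$ as the $\mathbb{K}$-linear map $x\mapsto\sum a_gg(x)$. The $G$-Dickson matrix $D_G(a)$ has rows and columns indexed by $g_1,\dots,g_N$ and entries $D_G(a)_{g,h}=h(a_{h^{-1}g})$. Matrices of linear maps have as columns the coordinates of images of basis vectors. *)

(* Defs.v *)
From HB Require Import structures.
From mathcomp Require Import all_boot all_order all_algebra all_fingroup all_field.
Set Implicit Arguments. Unset Strict Implicit. Unset Printing Implicit Defensive.
Import GRing.Theory.
Local Open Scope ring_scope.

(* Paper's K is the base field F; paper's L is the splitting field type L
   (the full space {:L}); G = 'Gal({:L} / 1). *)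
Section GaloisTensor.
Variables (F : fieldType) (L : splittingFieldType F).

Notation Gt := (gal_of (fullv : {vspace L})).

(* paper composition  g o h  (apply h first);  in mathcomp (h * g) x = g (h x) *)
Definition gcomp (g h : Gt) : Gt := (h * g)%g.

(* Model of L (x)_K L : the free L-module on a K-basis (vbasis {:L}) of the
   right factor, i.e. row vectors of length \dim {:L} over L.
   The L-structure is the left factor. *)
Definition tdim := \dim (fullv : {vspace L}).
Definition tensT := 'rV[L]_tdim.

(* pure tensor x (x) y *)
Definition tens (x y : L) : tensT :=
  \row_i (x * (coord (vbasis (fullv : {vspace L})) i y)%:A).

(* Id (x) f  (for a K-linear f : L -> L): the L-linear map sending
   x (x) e_i to x (x) f e_i, with e = vbasis {:L} *)
Definition idtens (f : L -> L) (v : tensT) : tensT :=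
  \sum_(i < tdim) v 0 i *: tens 1 (f (vbasis (fullv : {vspace L}))`_i).

Definition mulL (a : L) : L -> L := fun x => a * x.

(* group algebra L[G]: a = sum_g a_g g, coefficients a_g = a g *)
Definition galgT := {ffun Gt -> L^o}.

Definition gdelta (g : Gt) : galgT := [ffun k => (k == g)%:R].

Definition galg_act (a : galgT) : L -> L :=
  fun x => \sum_(g in 'Gal(fullv / 1%VS)%g) a g * g x.

(* composition product (a g) o (b h) = (a g(b)) (g o h) *)
Definition galg_comp (a b : galgT) : galgT :=
  \sum_(g in 'Gal(fullv / 1%VS)%g) \sum_(h in 'Gal(fullv / 1%VS)%g)
     (a g * g (b h)) *: gdelta (gcomp g h).

Definition DickG (N : nat) (gs : 'I_N -> Gt) (a : galgT) : 'M[L]_N :=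
  \matrix_(i, j) (gs j) (a (gcomp (gs j)^-1%g (gs i))).

End GaloisTensor.

Definition tvg (F : fieldType) (L : splittingFieldType F) (v : tensT L)
  (g : gal_of (fullv : {vspace L})) : tensT L :=
  idtens (fun x => (g^-1)%g x) v.

(* Main.v *)
Require Import Defs.
From HB Require Import structures.
From mathcomp Require Import all_boot all_order all_algebra all_fingroup all_field.
Set Implicit Arguments. Unset Strict Implicit. Unset Printing Implicit Defensive.
Import GRing.Theory.
Local Open Scope ring_scope.

Section Helpers.
Variables (F : fieldType) (L : splittingFieldType F).
Local Notation E := (fullv : {vspace L}).
Local Notation e := (vbasis (fullv : {vspace L})).

Definition Mf (f : L -> L) : 'M[L]_(tdim L) :=
  \matrix_(i, j) (coord e j (f e`_i))%:A.

Lemma idtensE f (w : tensT L) : idtens f w = w *m Mf f.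
Proof.
apply/rowP=> j; rewrite /idtens summxE !mxE; apply: eq_bigr => i _.
by rewrite !mxE mul1r.
Qed.

Lemma Mf_comp (f : 'End(L)) (g : L -> L) : Mf g *m Mf f = Mf (fun x => f (g x)).
Proof.
apply/matrixP => i j; rewrite !mxE.
rewrite [in RHS](coord_vbasis (memvf (g e`_i))) linear_sum linear_sum /=.
rewrite scaler_suml; apply: eq_bigr => k _; rewrite !mxE.
by rewrite !linearZ /= mulr_algl scalerA.
Qed.

Lemma idtens_comp (f : 'End(L)) g (w : tensT L) :
  idtens f (idtens g w) = idtens (fun x => f (g x)) w.
Proof. by rewrite !idtensE -mulmxA Mf_comp. Qed.

Lemma idtens_ext (f g : L -> L) (w : tensT L) : f =1 g -> idtens f w = idtens g w.
Proof. by move=> fg; rewrite /idtens; apply: eq_bigr => i _; rewrite fg. Qed.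

Lemma idtensZ (f : L -> L) c (w : tensT L) : idtens f (c *: w) = c *: idtens f w.
Proof. by rewrite !idtensE scalemxAl. Qed.

Lemma idtens0 (f : L -> L) : idtens f 0 = 0.
Proof. by rewrite idtensE mul0mx. Qed.

Lemma idtens_sum (f : L -> L) (I : finType) (P : pred I) (w : I -> tensT L) :
  idtens f (\sum_(i | P i) w i) = \sum_(i | P i) idtens f (w i).
Proof. by rewrite idtensE mulmx_suml; apply: eq_bigr => i _; rewrite idtensE. Qed.


Lemma Mf_id : Mf id = 1%:M.
Proof.
apply/matrixP => i j; rewrite !mxE coord_free ?(basis_free (vbasisP _)) //.
by rewrite scaler_nat eq_sym.
Qed.

Lemma idtens_scal (c : F) (w : tensT L) : idtens (mulL c%:A) w = c%:A *: w.
Proof.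
rewrite idtensE; have -> : Mf (mulL c%:A) = c%:A *: Mf id.
  apply/matrixP => i j; rewrite !mxE /mulL mulr_algl linearZ /=.
  by rewrite mulr_algl [coord _ _ (c *: _)]linearZ /= scalerA (mulrC c).
by rewrite Mf_id -scalemxAr mulmx1.
Qed.

Lemma idtens_addL x y (w : tensT L) :
  idtens (mulL (x + y)) w = idtens (mulL x) w + idtens (mulL y) w.
Proof.
rewrite !idtensE -mulmxDr; congr (_ *m _); apply/matrixP => i j.
by rewrite !mxE /mulL mulrDl linearD /= scalerDl.
Qed.

Lemma idtens_mulL x y (w : tensT L) :
  idtens (mulL (x * y)) w = idtens (mulL x) (idtens (mulL y) w).
Proof.
transitivity (idtens (amull x) (idtens (mulL y) w)); last first.
  by apply: idtens_ext => z; rewrite lfunE.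
by rewrite idtens_comp; apply: idtens_ext => z; rewrite lfunE /= /mulL mulrA.
Qed.

Lemma eig_all (alpha : L) (Halpha : <<1%VS; alpha>>%VS = fullv)
  (v : tensT L) (Hv : idtens (mulL alpha) v = alpha *: v) beta :
  idtens (mulL beta) v = beta *: v.
Proof.
pose S b := idtens (mulL b) v = b *: v.
have SC c : S c%:A by rewrite /S idtens_scal.
have SD x y : S x -> S y -> S (x + y).
  by rewrite /S idtens_addL => -> ->; rewrite scalerDl.
have SM x y : S x -> S y -> S (x * y).
  by rewrite /S idtens_mulL => Sx ->; rewrite idtensZ Sx scalerA mulrC.
have SX i : S (alpha ^+ i).
  elim: i => [|i IH]; first by rewrite expr0 -(scale1r 1); exact: SC.
  by rewrite exprS; apply: SM.
have Hb : beta \in <<1%VS; alpha>>%VS by rewrite Halpha memvf.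
case/(Fadjoin_polyP (K:=1%AS)): Hb => p Kp ->.
rewrite horner_coef; apply: (big_ind S) => //.
  by rewrite -(scale0r (1 : L)); exact: SC.
move=> i _; apply: SM => //.
have /vlineP[c ->] : p`_i \in (1%VS : {vspace L}) by exact: (polyOverP Kp).
exact: SC.
Qed.


Local Notation Gt := (gal_of (fullv : {vspace L})).

Lemma galVK (g : Gt) x : (g^-1)%g (g x) = x.
Proof. by rewrite -galM ?memvf // mulgV gal_id. Qed.

Lemma galKV (g : Gt) x : g ((g^-1)%g x) = x.
Proof. by rewrite -galM ?memvf // mulVg gal_id. Qed.

Lemma gal_mul (g : Gt) x y : g (x * y) = g x * g y.
Proof. by rewrite rmorphM. Qed.

Lemma idtens_gal (g : Gt) f (w : tensT L) :
  idtens (fun x => g x) (idtens f w) = idtens (fun x => g (f x)) w.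
Proof. exact: (idtens_comp (g : 'End(L))). Qed.


Section Eig.
Variables (alpha : L) (Halpha : <<1%VS; alpha>>%VS = fullv)
  (v : tensT L) (Hv : idtens (mulL alpha) v = alpha *: v).

Lemma tvg_eig (g : Gt) beta :
  idtens (mulL beta) (tvg v g) = g beta *: tvg v g.
Proof.
rewrite /tvg.
transitivity (idtens (amull beta) (idtens (fun x => (g^-1)%g x) v)).
  by apply: idtens_ext => z; rewrite lfunE.
rewrite idtens_comp.
transitivity (idtens (fun x => (g^-1)%g x) (idtens (mulL (g beta)) v)).
  by rewrite idtens_gal; apply: idtens_ext => z; rewrite lfunE /= /mulL gal_mul galVK.
by rewrite (eig_all Halpha Hv) idtensZ.
Qed.

Lemma tvg_act (g h : Gt) :
  idtens (fun x => g x) (tvg v h) = tvg v (gcomp h (g^-1)%g).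
Proof.
rewrite /tvg /gcomp idtens_gal; apply: idtens_ext => z.
by rewrite invMg invgK galM ?memvf.
Qed.

Lemma tvg_neq0 (g : Gt) : v != 0 -> tvg v g != 0.
Proof.
move=> vnz; apply: contraNneq vnz => H.
have := tvg_act g g; rewrite H idtens0 /gcomp mulVg /tvg => H0.
rewrite [RHS](idtens_ext _ (g := id)) in H0; last by move=> z; rewrite invg1 gal_id.
by rewrite idtensE Mf_id mulmx1 in H0; rewrite -H0.
Qed.

End Eig.


Lemma idtens_sumf (I : finType) (P : pred I) (f : I -> L -> L) (w : tensT L) :
  idtens (fun x => \sum_(k | P k) f k x) w = \sum_(k | P k) idtens (f k) w.
Proof.
rewrite idtensE; under eq_bigr do rewrite idtensE.
rewrite -mulmx_sumr; congr (_ *m _); apply/matrixP => i j.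
rewrite summxE !mxE linear_sum scaler_suml; apply: eq_bigr => k _.
by rewrite mxE.
Qed.

Lemma idtens_mulgal c (g : Gt) (w : tensT L) :
  idtens (fun x => c * g x) w = idtens (mulL c) (idtens (fun x => g x) w).
Proof.
transitivity (idtens (amull c) (idtens (fun x => g x) w)); last first.
  by apply: idtens_ext => z; rewrite lfunE.
by rewrite idtens_comp; apply: idtens_ext => z; rewrite lfunE.
Qed.

Lemma reindexG (R : Type) (idx : R) (op : Monoid.com_law idx)
  (G : {group Gt}) x (Fn : Gt -> R) : x \in G ->
  \big[op/idx]_(k in G) Fn k = \big[op/idx]_(h in G) Fn (x * h^-1)%g.
Proof.
move=> Gx; rewrite (reindex_inj (h := fun h => x * h^-1)%g) /=.
  by apply: eq_bigl => h; rewrite groupMl // groupV.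
by move=> h1 h2 /mulgI /invg_inj.
Qed.

Lemma sumG (R : Type) (idx : R) (op : Monoid.com_law idx) N (gs : 'I_N -> Gt)
  (G : {set Gt}) (gs_inj : injective gs) (gs_in : forall i, gs i \in G)
  (gs_onto : forall g, g \in G -> exists i, gs i = g) (Fn : Gt -> R) :
  \big[op/idx]_(g in G) Fn g = \big[op/idx]_(i < N) Fn (gs i).
Proof.
have -> : G = gs @: setT.
  apply/setP => g; apply/idP/imsetP => [/gs_onto[i <-]|[i _ ->]] //.
  by exists i; rewrite ?in_setT.
rewrite big_imset /=; last by move=> i j _ _ /gs_inj.
by apply: eq_bigl => i; rewrite in_setT.
Qed.

End Helpers.
Theorem mainTheorem7 (F : fieldType) (L : splittingFieldType F)
  (Hgal : galois 1%VS (fullv : {vspace L}))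
  (N : nat) (gs : 'I_N -> gal_of (fullv : {vspace L}))
  (gs_inj : injective gs)
  (gs_in : forall i, gs i \in 'Gal(fullv / 1%VS)%g)
  (gs_onto : forall g, g \in 'Gal(fullv / 1%VS)%g -> exists i, gs i = g)
  (gs1 : forall i : 'I_N, nat_of_ord i = 0%N -> gs i = 1%g)
  (alpha : L) (Halpha : <<1%VS; alpha>>%VS = fullv)
  (v : tensT L) (vnz : v != 0)
  (Hv : idtens (mulL alpha) v = alpha *: v) :
  let B := [tuple tvg v (gs i) | i < N] in
  [/\ (forall g, g \in 'Gal(fullv / 1%VS)%g ->
         idtens (mulL alpha) (tvg v g) = g alpha *: tvg v g),
      (forall g h, g \in 'Gal(fullv / 1%VS)%g -> h \in 'Gal(fullv / 1%VS)%g ->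
         idtens (fun x => g x) (tvg v h) = tvg v (gcomp h (g^-1)%g)),
      basis_of fullv B,
      (forall a : galgT L,
         \matrix_(i < N, j < N) coord B i (idtens (galg_act a) (tvg v (gs j)))
           = (DickG gs a)^T)
    & (forall a : galgT L,
         \matrix_(i < N, j < N) (galg_comp (gdelta (gs j)) a) (gs i)
           = DickG gs a)].
Proof.
move=> B.
set G := 'Gal(fullv / 1%VS)%g.
have BE (i : 'I_N) : B`_i = tvg v (gs i) by rewrite /B nth_mktuple.
have eigB := tvg_eig Halpha Hv.
have GE : G = gs @: setT.
  apply/setP => g; apply/idP/imsetP => [/gs_onto[i <-]|[i _ ->]] //.
  by exists i; rewrite ?in_setT.
have cardG : #|G| = N by rewrite GE card_imset // cardsT card_ord.
have freeB : free B.
  apply/freeP => k Hk i.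
  have Hb beta : \sum_(l < N) (k l * gs l beta) *: tvg v (gs l) = 0.
    have := congr1 (idtens (mulL beta)) Hk; rewrite idtens0 idtens_sum => H; apply: etrans H.
    by apply: eq_bigr => l _; rewrite BE idtensZ eigB scalerA.
  have [j Hj] : exists j, (tvg v (gs i)) 0 j != 0.
    case: (pickP (fun j => tvg v (gs i) 0 j != 0)) => [j Hj|H0]; first by exists j.
    have := tvg_neq0 (gs i) vnz; case/eqP; apply/rowP => j.
    by move: (H0 j) => /negbFE/eqP ->; rewrite mxE.
  pose c g := \sum_(l | gs l == g) k l * (tvg v (gs l)) 0 j.
  suff Hc : c (gs i) = 0.
    move: Hc; rewrite /c (big_pred1 i) => [/eqP|l]; last by rewrite inj_eq.
    by rewrite mulf_eq0 (negPf Hj) orbF => /eqP.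
  apply: (@gal_independent _ _ _ (fun g => g \in G) c _ (gs i) (gs_in i)).
  move=> beta _.
  have := congr1 (fun w : tensT L => w 0 j) (Hb beta); rewrite summxE mxE => H.
  apply: etrans H.
  under eq_bigr do rewrite mulr_suml.
  rewrite (partition_big gs (fun g => g \in G) (P := predT)) //=.
  apply: eq_bigr => g Gg; apply: eq_bigr => l /eqP <-.
  by rewrite mxE mulrAC.
split.
- by move=> g _; exact: eigB.
- by move=> g h _ _; exact: tvg_act.
- rewrite basisEfree freeB subvf /= size_tuple dimvf.
  change (1 * tdim L <= #|'I_N|)%N.
  by rewrite mul1n card_ord -cardG -(galois_dim Hgal) dimv1 divn1.
- move=> a; apply/matrixP => i j; rewrite !mxE.
  have key : idtens (galg_act a) (tvg v (gs j)) =
      \sum_(l < N) (gs l (a (gs j * (gs l)^-1)%g)) *: B`_l.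
    rewrite /galg_act idtens_sumf.
    under eq_bigr do rewrite idtens_mulgal tvg_act eigB.
    rewrite (reindexG _ _ (gs_in j)) (sumG _ gs_inj gs_in gs_onto).
    apply: eq_bigr => l _.
    by rewrite BE /gcomp invMg invgK -mulgA mulVg mulg1.
  by rewrite key coord_sum_free.
- move=> a; apply/matrixP => i j; rewrite !mxE.
  rewrite /galg_comp sum_ffunE (bigD1 (gs j)) ?gs_in //= [X in _ + X = _]big1 ?addr0; last first.
    move=> g /andP[_ ngj]; rewrite sum_ffunE big1 // => h _.
    by rewrite /gdelta !ffunE (negPf ngj) mul0r scale0r.
  have Gh : (gs i * (gs j)^-1)%g \in G by rewrite groupM ?groupV ?gs_in.
  rewrite sum_ffunE (bigD1 _ Gh) //= big1 ?addr0; last first.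
    move=> h /andP[_ nh]; rewrite /gdelta !ffunE /gcomp.
    suff -> : (gs i == h * gs j)%g = false by rewrite scaler0.
    by apply: contraNF nh => /eqP ->; rewrite mulgK.
  by rewrite /gdelta !ffunE /gcomp mulgKV !eqxx mul1r /=; apply: mulr1.
Qed.
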